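(* Let $V$ be a real vector space of odd finite dimension and $G\le\mathrm{GL}(V)$ a finite group. Let $S\le V$ be an irreducible $\mathbb{R}G$-submodule such that $V$ is $S$-homogeneous (i.e. $V$ is a direct sum of $\mathbb{R}G$-modules isomorphic to $S$), and suppose that the pair $(G,S)$ has the $E1$-property. Then the pair $(G,V)$ has the $E1$-property.
   Context: For a finite group $G$, a finite-dimensional $\mathbb{R}G$-module $V$ with representation $\rho\colon G\to\mathrm{GL}(V)$, and $n\in\mathrm{GL}(V)$ of finite order normalizing $\rho(G)$, the triple $(G,V,n)$ has the $E1$-property if there is $g\in G$ such that $\rho(g)n$ has eigenvalue $1$. The pair $(G,V)$ has the $E1$-property if $(G,V,n')$ has the $E1$-property for every $n'\in\mathrm{GL}(V)$ of finite order normalizing $\rho(G)$. *)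

(* Defs.v *)
From HB Require Import structures.
From mathcomp Require Import all_boot all_order all_algebra all_fingroup all_character.
From mathcomp Require Import reals.
Set Implicit Arguments. Unset Strict Implicit. Unset Printing Implicit Defensive.
Import GRing.Theory Num.Theory.
Local Open Scope ring_scope.

Section E1.
Variables (R : realType) (gT : finGroupType) (G : {group gT}) (m : nat).
Variable rG : mx_representation R G m.

(* k-th power of a square matrix (works for any size m, including the
   possibly non-".+1" size \rank S). *)
Definition mxpow (N : 'M[R]_m) (k : nat) : 'M[R]_m := iter k (mulmx N) 1%:M.

Definition finite_order_GL (N : 'M[R]_m) : Prop :=
  N \in unitmx /\ exists2 k : nat, (0 < k)%N & mxpow N k = 1%:M.

Definition normalizes_rep (N : 'M[R]_m) : Prop :=
  (forall g, g \in G -> exists2 h, h \in G & N *m rG g *m invmx N = rG h) /\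
  (forall h, h \in G -> exists2 g, g \in G & N *m rG g *m invmx N = rG h).

Definition E1_triple (N : 'M[R]_m) : Prop :=
  exists2 g, g \in G & eigenvalue (rG g *m N) 1.

Definition E1_pair : Prop :=
  forall N : 'M[R]_m, finite_order_GL N -> normalizes_rep N -> E1_triple N.

Definition homogeneous_mx (S : 'M[R]_m) : Prop :=
  exists k : nat, exists W : 'I_k -> 'M[R]_m,
    [/\ forall i, mx_iso rG S (W i),
        mxdirect (\sum_i W i) &
        (\sum_i W i == 1%:M)%MS].
End E1.

(* Main.v *)
Require Import Defs.
From HB Require Import structures.
From mathcomp Require Import all_boot all_order all_algebra all_fingroup all_character.
From mathcomp Require Import reals polyrcf.
From Stdlib Require Import ClassicalEpsilon.
Import GRing.Theory Num.Theory.
Local Open Scope ring_scope.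
Set Implicit Arguments. Unset Strict Implicit.

Lemma odd_eig (R : realType) m (A : 'M[R]_m) : odd m -> exists a, eigenvalue A a.
Proof.
move=> om; have [|a ra] := @odd_poly_root R (char_poly A).
  by rewrite size_char_poly /= negbK.
by exists a; rewrite eigenvalue_root_char.
Qed.

Lemma one_neq0 (R : realType) d : (0 < d)%N -> (1%:M : 'M[R]_d) != 0.
Proof. by move=> d0; rewrite -mxrank_eq0 mxrank1 -lt0n. Qed.

Lemma conj_inv (R : realType) d (A B C : 'M[R]_d) : A \in unitmx ->
  A *m B = C *m A -> invmx A *m C = B *m invmx A.
Proof.
move=> uA e; rewrite -[invmx A *m C](mulmxK uA) -(mulmxA (invmx A) C A) -e mulmxA.
by rewrite mulVmx // mul1mx.
Qed.

Section Main.
Variables (R : realType) (gT : finGroupType) (G : {group gT}) (n d k : nat).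
Variables (rG : mx_representation R G n) (rS : mx_representation R G d).
Variable E_ : 'I_k -> 'M[R]_(d, n).
Hypothesis hE : forall i x, x \in G -> E_ i *m rG x = rS x *m E_ i.
Hypothesis hspan : forall p (u : 'M[R]_(p, n)),
  exists X : 'I_k -> 'M[R]_(p, d), u = \sum_i X i *m E_ i.
Hypothesis huniq : forall p (X : 'I_k -> 'M[R]_(p, d)),
  \sum_i X i *m E_ i = 0 -> forall i, X i = 0.
Hypothesis irrS : mx_irreducible rS.
Hypothesis oddd : odd d.
Hypothesis oddk : odd k.
Hypothesis E1S : E1_pair rS.

Lemma schur_gen (Y : 'M[R]_d) :
  (forall h, h \in G -> exists2 g, g \in G & Y *m rS g = rS h *m Y) ->
  Y = 0 \/ Y \in unitmx.
Proof.
move=> hY.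
have KY := sub_kermxP (submx_refl (kermx Y)).
have modK : mxmodule rS (kermx Y).
  apply/mxmoduleP => h Gh; apply/sub_kermxP.
  have [g Gg e] := hY h Gh.
  by rewrite -mulmxA -e mulmxA KY mul0mx.
have [K0|Kn0] := eqVneq (kermx Y) 0.
  by right; rewrite -row_free_unit -kermx_eq0 K0.
left; case/mx_irrP: irrS => _ /(_ _ modK Kn0) /row_fullP [B eB].
by rewrite -[Y]mul1mx -eB -mulmxA KY mulmx0.
Qed.

Lemma scal_gen (Y : 'M[R]_d) :
  (forall g, g \in G -> Y *m rS g = rS g *m Y) -> exists c, Y = c%:M.
Proof.
move=> hY; have [a ea] := @odd_eig _ _ Y oddd.
exists a.
have [|/eqP|U] := @schur_gen (Y - a%:M).
- move=> h Gh; exists h => //.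
  by rewrite mulmxBl mulmxBr hY // scalar_mxC.
- by rewrite subr_eq0 => /eqP.
- by move: ea; rewrite /eigenvalue /eigenspace kermx_eq0 row_free_unit U.
Qed.

Lemma sum_delta p (A : 'M[R]_(p, d)) i :
  \sum_l (if l == i then A else 0) *m E_ l = A *m E_ i.
Proof.
rewrite (bigD1 i) //= eqxx big1 ?addr0 // => l /negPf ->.
by rewrite mul0mx.
Qed.

Lemma main_sec : E1_pair rG.
Proof.
move=> N [uN [j j0 Nj]] [nor1 nor2].
have d0 : (0 < d)%N by apply: odd_gt0.
have k0 : (0 < k)%N by apply: odd_gt0.
pose i0 := Ordinal k0.
have hX i := hspan (E_ i *m N).
pose X i := proj1_sig (constructive_indefinite_description _ (hX i)).
have XE i : E_ i *m N = \sum_l X i l *m E_ l :=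
  proj2_sig (constructive_indefinite_description _ (hX i)).
clearbody X.
have Nrel g h : N *m rG g *m invmx N = rG h -> N *m rG g = rG h *m N.
  by move=> e; rewrite -e mulmxKV.
have inter g h : g \in G -> h \in G -> N *m rG g = rG h *m N ->
    forall i l, X i l *m rS g = rS h *m X i l.
  move=> Gg Gh e i.
  have : \sum_l (X i l *m rS g - rS h *m X i l) *m E_ l = 0.
    rewrite (eq_bigr (fun l => (X i l *m E_ l) *m rG g
               - rS h *m (X i l *m E_ l))); last first.
      by move=> l _; rewrite mulmxBl -!mulmxA hE.
    rewrite sumrB -mulmx_suml -mulmx_sumr -XE -mulmxA e mulmxA hE //.
    by rewrite -mulmxA subrr.
  move/huniq => H l; apply/eqP; rewrite -subr_eq0; exact/eqP/H.
have E0 i : E_ i != 0.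
  apply/negP => /eqP Ei.
  have := @huniq _ (fun l => if l == i then (1%:M : 'M_d) else 0) _ i.
  rewrite eqxx => H; move: (@one_neq0 R d d0); rewrite H ?eqxx //.
  by rewrite sum_delta Ei mulmx0.
have [l0 Xl0] : exists l, X i0 l != 0.
  case: (boolP [exists l, X i0 l != 0]) => [/existsP //| /existsPn H].
  exfalso; move: (E0 i0); rewrite -[E_ i0](mulmxK uN) XE big1 ?mul0mx ?eqxx //.
  by move=> l _; move/negbNE: (H l) => /eqP ->; rewrite mul0mx.
pose M := X i0 l0.
have uM : M \in unitmx.
  have [|/eqP|//] := @schur_gen M; last by rewrite (negPf Xl0).
  move=> h Gh; have [g Gg e] := nor2 h Gh; exists g => //.
  exact: inter g h Gg Gh (Nrel _ _ e) i0 l0.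
have hb i l : exists c, X i l *m invmx M = c%:M.
  apply: scal_gen => h Gh; have [g Gg e] := nor2 h Gh.
  have I := inter g h Gg Gh (Nrel _ _ e).
  rewrite -mulmxA (conj_inv uM (I i0 l0)) mulmxA I -mulmxA //.
pose b i l := proj1_sig (constructive_indefinite_description _ (hb i l)).
have XB i l : X i l = b i l *: M.
  rewrite -mul_scalar_mx -(proj2_sig (constructive_indefinite_description _ (hb i l))).
  by rewrite mulmxKV.
clearbody b.
pose B : 'M[R]_k := \matrix_(i, l) b i l.
have EN i : E_ i *m N = \sum_l b i l *: (M *m E_ l).
  by rewrite XE; apply: eq_bigr => l _; rewrite XB scalemxAl.
have pw t i : E_ i *m mxpow N t
    = \sum_l (mxpow B t i l) *: (mxpow M t *m E_ l).
  elim: t i => [|t IH] i.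
    rewrite /= mulmx1 (bigD1 i) //= big1 ?addr0.
      by rewrite mxE eqxx scale1r mul1mx.
    by move=> l /negPf nl; rewrite mxE eq_sym nl mulr0n scale0r.
  rewrite [mxpow N _]/= mulmxA EN mulmx_suml.
  rewrite (eq_bigr (fun l => \sum_q (b i l * mxpow B t l q) *:
                     (M *m mxpow M t *m E_ q))); last first.
    move=> l _; rewrite -scalemxAl -mulmxA IH mulmx_sumr scaler_sumr.
    apply: eq_bigr => q _.
    by rewrite scalemxAr scalerA -scalemxAr mulmxA.
  rewrite exchange_big /=; apply: eq_bigr => q _.
  by rewrite [mxpow B _]/= mxE scaler_suml; apply: eq_bigr => l _; rewrite mxE.
have pj i l1 : mxpow B j i l1 *: mxpow M j = if l1 == i then 1%:M else 0.
  have := pw j i; rewrite Nj mulmx1 => e.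
  have : \sum_l (mxpow B j i l *: mxpow M j - (if l == i then 1%:M else 0))
           *m E_ l = 0.
    rewrite (eq_bigr (fun l => mxpow B j i l *: (mxpow M j *m E_ l)
              - (if l == i then 1%:M else 0) *m E_ l)); last first.
      by move=> l _; rewrite mulmxBl scalemxAl.
    by rewrite sumrB -e sum_delta mul1mx subrr.
  by move/huniq => H; apply/eqP; rewrite -subr_eq0 H.
pose c := mxpow B j i0 i0.
have cM : c *: mxpow M j = 1%:M by rewrite /c pj eqxx.
have Mj0 : mxpow M j != 0.
  by apply: contraNneq (@one_neq0 R d d0) => e; rewrite -cM e scaler0.
have Bj : mxpow B j = c%:M.
  apply/matrixP => i l; rewrite mxE.
  have := pj i l; case: eqP => [->|nil] /= e.
    have : (mxpow B j i i - c) *: mxpow M j = 0 by rewrite scalerBl e cM subrr.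
    by move/eqP; rewrite scalemx_eq0 (negPf Mj0) orbF subr_eq0 => /eqP ->; rewrite eqxx mulr1n.
  move/eqP: e; rewrite scalemx_eq0 (negPf Mj0) orbF => /eqP ->.
  by case: eqP => // il; case: nil.
have [lam /eigenvalueP [w wB w0]] := @odd_eig _ _ B oddk.
have wpow t : w *m mxpow B t = lam ^+ t *: w.
  elim: t => [|t IH]; first by rewrite /= mulmx1 expr0 scale1r.
  by rewrite [mxpow B _]/= mulmxA wB -scalemxAl IH scalerA exprS.
have lamj : lam ^+ j = c.
  have := wpow j; rewrite Bj mul_mx_scalar => /eqP.
  rewrite -subr_eq0 -scalerBl scalemx_eq0 (negPf w0) orbF subr_eq0.
  by move/eqP.
pose M' := lam *: M.
have M'pow t : mxpow M' t = lam ^+ t *: mxpow M t.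
  elim: t => [|t IH]; first by rewrite /= expr0 scale1r.
  by rewrite [mxpow M' _]/= IH -scalemxAl -scalemxAr scalerA exprS.
have M'j : mxpow M' j = 1%:M by rewrite M'pow lamj.
have uM' : M' \in unitmx.
  move: M'j; case: (j) j0 => // j' _ /= e.
  by case: (mulmx1_unit e).
have relM g h : g \in G -> h \in G -> N *m rG g *m invmx N = rG h ->
    M' *m rS g *m invmx M' = rS h.
  move=> Gg Gh e; have I := inter g h Gg Gh (Nrel _ _ e) i0 l0.
  have e' : M' *m rS g = rS h *m M'.
    by rewrite -scalemxAl I scalemxAr.
  by rewrite e' mulmxK.
have [g Gg /eigenvalueP [v vE v0]] : E1_triple rS M'.
  apply: E1S; first by split => //; exists j.
  split.
  - move=> g Gg; have [h Gh e] := nor1 g Gg; exists h => //.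
    exact: relM.
  - move=> h Gh; have [g Gg e] := nor2 h Gh; exists g => //.
    exact: relM.
exists g => //; apply/eigenvalueP.
exists (\sum_i w 0 i *: (v *m E_ i)).
  rewrite scale1r mulmx_suml.
  rewrite (eq_bigr (fun i => \sum_l (w 0 i * b i l) *: (v *m rS g *m M *m E_ l))); last first.
    move=> i _; rewrite -scalemxAl mulmxA -(mulmxA v) hE // mulmxA.
    rewrite -(mulmxA _ (E_ i)) EN mulmx_sumr scaler_sumr; apply: eq_bigr => l _.
    by rewrite -scalemxAr scalerA !mulmxA.
  rewrite exchange_big /=; apply: eq_bigr => l _.
  rewrite -scaler_suml.
  have sb : \sum_i w 0 i * b i l = lam * w 0 l.
    have := congr1 (fun A : 'rV[R]_k => A 0 l) wB; rewrite /= !mxE => <-.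
    by apply: eq_bigr => i _; rewrite mxE.
  rewrite sb mulrC -scalerA; congr (_ *: _).
  rewrite scale1r in vE.
  transitivity ((v *m (rS g *m M')) *m E_ l); last by rewrite vE.
  by rewrite /M' -!scalemxAr -scalemxAl !mulmxA.
apply/negP => /eqP H.
have [i wi] : exists i, w 0 i != 0.
  case: (boolP [exists i, w 0 i != 0]) => [/existsP //| /existsPn Hw].
  exfalso; move/negP: w0; apply; apply/eqP/matrixP => a i.
  by rewrite mxE (ord1 a); exact/eqP/negbNE/Hw.
have Hs : \sum_i (w 0 i *: v) *m E_ i = 0.
  by rewrite -[RHS]H; apply: eq_bigr => i' _; rewrite scalemxAl.
move/eqP: (huniq Hs i).
by rewrite scalemx_eq0 (negPf wi) (negPf v0).
Qed.
End Main.

Theorem lemma2 (R : realType) (n : nat) (gT : finGroupType) (G : {group gT})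
    (rG : mx_representation R G n) (S : 'M[R]_n) (modS : mxmodule rG S) :
  odd n ->
  mx_faithful rG ->
  mxsimple rG S ->
  homogeneous_mx rG S ->
  E1_pair (submod_repr modS) ->
  E1_pair rG.
Proof.
move=> on _ simS [k [W [isoW dxW sumW]]] E1S.
have hf i : exists f, [&& f \in unitmx, (S <= dom_hom_mx rG f)%MS
                        & (S *m f == W i)%MS].
  by case: (isoW i) => f uf hf ef; exists f; rewrite uf hf; apply/eqmxP.
pose f i := proj1_sig (constructive_indefinite_description _ (hf i)).
have fP i : [&& f i \in unitmx, (S <= dom_hom_mx rG (f i))%MS
                        & (S *m f i == W i)%MS] :=
  proj2_sig (constructive_indefinite_description _ (hf i)).
clearbody f.
pose E := @val_submod _ _ S _ (1%:M : 'M[R]_(\rank S)).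
pose E_ i := E *m f i.
have EW i : (E_ i == W i)%MS.
  case/and3P: (fP i) => _ _ /eqmxP ef.
  by apply/eqmxP; exact: eqmx_trans (eqmxMr (f i) (val_submod1 S)) ef.
have rfE i : row_free (E_ i).
  case/and3P: (fP i) => uf _ _.
  rewrite /row_free mxrankMfree ?row_free_unit //.
  by apply/eqP; exact: (val_submod1 S).1.
have ErG x : x \in G -> E *m rG x = submod_repr modS x *m E.
  by move=> Gx; rewrite -val_submodJ // val_submodE mul1mx.
have rkW i : \rank (W i) = \rank S.
  by apply/esym/mxrank_iso.
have nkd : n = (k * \rank S)%N.
  have rk1 : \rank (\sum_i W i) = n by rewrite (eqmx_rank sumW) mxrank1.
  apply: etrans (esym rk1) _.
  move/mxdirectP: dxW => /= ->.
  rewrite (eq_bigr (fun _ => \rank S)) ?sum_nat_const ?card_ord //.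
move: on; rewrite [in odd n]nkd oddM => /andP [ok od].
apply: (@main_sec R gT G n (\rank S) k rG (submod_repr modS) E_) => //.
- move=> i x Gx; case/and3P: (fP i) => _ hom _.
  rewrite /E_ -(hom_mxP (submx_trans (val_submodP _) hom)) // ErG //.
  exact: esym (mulmxA _ _ _).
- move=> p u; apply/sub_sums_genmxP.
  apply: submx_trans (submx1 u) _.
  case/andP: sumW => _ /submx_trans; apply.
  by apply: sumsmxS => i _; rewrite genmxE; case/andP: (EW i).
- move=> p X H i.
  have [|A_ _ _ uniqC] := @sub_dsumsmx _ _ (fun _ => true) p n 0 W dxW.
    exact: sub0mx.
  have e1 := uniqC (fun i => X i *m E_ i) _ _ i.
  have e0 := uniqC (fun _ => 0) _ _ i.
  apply: (row_free_inj (rfE i)); rewrite mul0mx.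
  rewrite e1 // ?H // -?e0 // ?big1 // => j _; rewrite ?sub0mx //.
  by apply: submx_trans (submxMl _ _) _; case/andP: (EW j).
- exact/submod_mx_irr.
Qed.
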